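(* Let $(X,\tau)$ be a $T_1$ topological space. Suppose that for every continuous map $f:(X,\tau)\to(\mathcal P(X),\tau_{\mathcal S(X)})$ with $x\in f(x)$ for all $x\in X$, there exist a continuous neighborhood refinement map $f_*$ of $f$ and a set $D\subseteq X$ such that the map $g:(X,\tau)\to(\mathcal P(D),\tau_{\mathcal S(D)})$, $g(x)=f_*(x)\cap D$, satisfies (1) $g^{-1}(\{\emptyset\})=\emptyset$, and (2) $\left|\bigcup_{y\in N^*(x)}g(y)\right|<\omega_0$ for all $x\in X$, where $N^*:X\to\tau$ is given by $N^*(a)=f_*^{-1}(\mathcal U_X(a))=\{x\in X: a\in f_*(x)\}$. Then $X$ is a paracompact D-space.
   Context: For a set $A$ and $a\in A$, $\mathcal U_A(a)=\{B\subseteq A: a\in B\}$; the principal ultrafilter topology $\tau_{\mathcal S(A)}$ on $\mathcal P(A)$ is generated by the subbase $\{\mathcal U_A(a): a\in A\}$. A continuous neighborhood refinement map of $f$ is a continuous map $f_*:(X,\tau)\to(\mathcal P(X),\tau_{\mathcal S(X)})$ with $x\in f_*(x)\subseteq f(x)$ for all $x$. Paracompact means every open cover has a locally finite open refinement (no Hausdorff assumption). An open neighborhood assignment is $N:X\to\tau$ with $x\in N(x)$; $X$ is a D-space if every open neighborhood assignment $N$ admits a closed discrete $D\subseteq X$ with $\bigcup_{d\in D}N(d)=X$. *)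

(* Defs.v *)
From mathcomp Require Import all_boot all_order.
From mathcomp Require Import all_classical all_reals all_analysis.
Set Implicit Arguments. Unset Strict Implicit. Unset Printing Implicit Defensive.
Local Open Scope classical_set_scope.

Section PUF.
Variable A : Type.

Definition U_ (a : A) : set (set A) := [set B | B a].

Definition is_topology (O : set (set (set A))) : Prop :=
  O setT /\
  (forall W1 W2, O W1 -> O W2 -> O (W1 `&` W2)) /\
  (forall F : set (set (set A)), F `<=` O -> O (\bigcup_(W in F) W)).

Definition gen_topology (S : set (set (set A))) : set (set (set A)) :=
  [set W | forall O, is_topology O -> S `<=` O -> O W].

Definition puf_open : set (set (set A)) := gen_topology [set U_ a | a in [set: A]].
End PUF.

Section Defs.
Variable X : topologicalType.

Definition puf_continuous (f : X -> set X) : Prop :=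
  forall W, puf_open W -> open (f @^-1` W).

Definition cont_nbhd_refinement (f fstar : X -> set X) : Prop :=
  puf_continuous fstar /\ (forall x, fstar x x /\ fstar x `<=` f x).

Definition open_cover (C : set (set X)) : Prop :=
  (forall U, C U -> open U) /\ \bigcup_(U in C) U = setT.

Definition refines (V C : set (set X)) : Prop :=
  forall v, V v -> exists2 U, C U & v `<=` U.

Definition locally_finite_family (V : set (set X)) : Prop :=
  forall x : X, exists W : set X, [/\ open W, W x &
     finite_set [set v | V v /\ v `&` W !=set0]].

(* paracompact (no Hausdorff assumption) *)
Definition paracompact : Prop :=
  forall C, open_cover C ->
    exists V, [/\ open_cover V, refines V C & locally_finite_family V].

Definition closed_discrete (D : set X) : Prop :=
  closed D /\ (forall d, D d -> exists W : set X, [/\ open W, W d & W `&` D = [set d]]).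

Definition open_nbhd_assignment (N : X -> set X) : Prop :=
  forall x, open (N x) /\ N x x.

Definition D_space : Prop :=
  forall N, open_nbhd_assignment N ->
    exists D, closed_discrete D /\ \bigcup_(d in D) N d = setT.
End Defs.

(* Main.v *)
Require Import Defs.
From mathcomp Require Import all_boot all_order.
From mathcomp Require Import all_classical all_reals all_analysis.
Local Open Scope classical_set_scope.

Lemma cont_of_open (X : topologicalType) (f : X -> set X) :
  (forall a, open [set x | f x a]) -> puf_continuous f.
Proof.
move=> hf W hW; apply: (hW [set W | open (f @^-1` W)]).
- split; first exact: openT.
  split; first by move=> W1 W2 o1 o2 /=; rewrite preimage_setI; exact: openI.
  by move=> F FO /=; rewrite preimage_bigcup; apply: bigcup_open => i /FO.
- by move=> _ [a _ <-]; exact: hf.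
Qed.

Lemma open_of_cont (X : topologicalType) (f : X -> set X) a :
  puf_continuous f -> open [set x | f x a].
Proof.
move=> hf; apply: (hf (U_ a)) => O _; apply; by exists a.
Qed.

Theorem mainTheorem7 (X : topologicalType) (hT1 : accessible_space X) :
  (forall f : X -> set X, puf_continuous f -> (forall x, f x x) ->
     exists (fstar : X -> set X) (D : set X),
       cont_nbhd_refinement f fstar /\
       (* g x := fstar x `&` D ; N* a := [set x | fstar x a] *)
       (forall x, fstar x `&` D <> set0) /\
       (forall x, finite_set (\bigcup_(y in [set z | fstar z x]) (fstar y `&` D)))) ->
  paracompact X /\ D_space X.
Proof.
move=> H; split.
- move=> C [Copen Ccov].
  have ex : forall x : X, exists U, C U /\ U x.
    move=> x; have : (\bigcup_(U in C) U) x by rewrite Ccov.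
    by case=> U CU Ux; exists U.
  have [U hU] := choice ex.
  have := H (fun x => [set a | U a x]).
  case.
  + apply: cont_of_open => a; exact: Copen (proj1 (hU a)).
  + by move=> x; exact: (proj2 (hU x)).
  move=> fs [D [[fc fr] [hne hfin]]].
  exists ((fun d => [set z | fs z d]) @` D); split.
  + split; first by move=> _ [d _ <-]; exact: open_of_cont.
    apply/seteqP; split => // x _.
    have [d [fxd Dd]] : fs x `&` D !=set0 by apply/set0P/eqP; exact: hne.
    by exists [set z | fs z d]; [exists d|].
  + move=> _ [d _ <-]; exists (U d); first exact: (proj1 (hU d)).
    by move=> z /= fzd; have := (proj2 (fr z)) d fzd.
  + move=> x; exists [set z | fs z x]; split.
    * exact: open_of_cont.
    * exact: (proj1 (fr x)).
    * apply: (sub_finite_set _ (finite_image (fun d => [set z | fs z d]) (hfin x))).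
      move=> v [[d Dd <-] [y [/= fyd fyx]]].
      by exists d => //; exists y => //.
- move=> N hN.
  have := H (fun x => [set a | N a x]).
  case.
  + apply: cont_of_open => a; exact: (proj1 (hN a)).
  + by move=> x; exact: (proj2 (hN x)).
  move=> fs [D [[fc fr] [hne hfin]]].
  pose Ns a := [set z | fs z a].
  have oNs a : open (Ns a) by exact: open_of_cont.
  have Nsa a : Ns a a by exact: (proj1 (fr a)).
  have finD x : finite_set (D `&` Ns x).
    apply: (sub_finite_set _ (hfin x)) => d [Dd fdx].
    by exists d => //; split => //; exact: Nsa.
  have clF (F : set X) : finite_set F -> closed F.
    by move=> fF; exact: (proj1 (@accessible_finite_set_closed X) hT1 F fF).
  exists D; split; last first.
    apply/seteqP; split => // x _.
    have [d [fxd Dd]] : fs x `&` D !=set0 by apply/set0P/eqP; exact: hne.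
    by exists d => //; exact: (proj2 (fr x)) d fxd.
  split.
  + rewrite -openC.
    have E : ~` D = \bigcup_(x in ~` D) (Ns x `&` ~` (D `&` Ns x)).
      apply/seteqP; split => x.
        move=> nDx; exists x => //; split; first exact: Nsa.
        by move=> [].
      by move=> [y _ [Nyx h]] Dx; apply: h; split.
    rewrite E.
    apply: bigcup_open => x _; apply: openI => //.
    by apply: closed_openC; exact: clF.
  + move=> d Dd.
    have fF : finite_set ((D `&` Ns d) `\ d).
      apply: sub_finite_set (finD d); exact: subDsetl.
    exists (Ns d `&` ~` ((D `&` Ns d) `\ d)); split.
    * exact: (openI (oNs d) (closed_openC (clF _ fF))).
    * split; first exact: Nsa.
      by move=> [_]; apply.
    * apply/seteqP; split => z.
        move=> [[Nz h] Dz]; apply: contrapT => nzd; apply: h.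
        by split; [split|].
      move=> /= ->; split; last exact: Dd.
      split; first exact: Nsa.
      by move=> [_]; apply.
Qed.
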